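(* Let $u, v \in U_n$ be symmetries (unitaries with $\mathrm{spec}(u),\mathrm{spec}(v) \subseteq \{1, -1\}$) such that $d_\infty(u, v) < \pi$. Then the geodesic $\gamma_{u,v}$ consists of symmetries, i.e. $\mathrm{spec}(\gamma_{u,v}(t))\subseteq\{1,-1\}$ for all $t\in[0,1]$.
   Context: $U_n$ is the unitary group, $\mathfrak{u}_n$ the skew-Hermitian matrices, $\|\cdot\|_\infty$ the operator norm. $d_\infty(u,v)$ is the infimum of $\int\|\dot\alpha(t)\|_\infty\,dt$ over piecewise smooth curves $\alpha$ in $U_n$ joining $u$ and $v$. For $d_\infty(u,v)<\pi$, $\gamma_{u,v}(t)=u\exp(t\log(u^{-1}v))$, $t\in[0,1]$, where $\log(w)$ is the unique $y\in\mathfrak{u}_n$ with $\|y\|_\infty<\pi$ and $e^y=w$; it is the unique minimal geodesic joining $u$ and $v$. *)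

(* Defs.v *)
From HB Require Import structures.
From mathcomp Require Import all_boot all_order all_algebra.
From mathcomp Require Import all_classical all_reals all_analysis.
From mathcomp Require Import complex.
Set Implicit Arguments. Unset Strict Implicit. Unset Printing Implicit Defensive.
Import Order.TTheory GRing.Theory Num.Theory.
Import numFieldNormedType.Exports.
Local Open Scope classical_set_scope.
Local Open Scope ring_scope.

Section UnitaryDefs.
Variables (R : realType) (n : nat).
Local Notation C := (R[i]).
Local Notation M := ('M[C]_n).

Definition adj (w : M) : M := \matrix_(i, j) complex.conjc (w j i).

Definition unitary (w : M) : Prop := adj w *m w = 1%:M.

Definition skew_hermitian (y : M) : Prop := adj y = - y.

Definition vnorm (x : 'cV[C]_n) : R :=
  Num.sqrt (\sum_i ((complex.Re (x i 0)) ^+ 2 + (complex.Im (x i 0)) ^+ 2)).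

Definition opnorm (A : M) : R :=
  sup [set vnorm (A *m x) | x in [set x : 'cV[C]_n | vnorm x = 1]].

Definition spec_pm1 (w : M) : Prop :=
  forall a : C, eigenvalue w a -> a = 1 \/ a = -1.

Definition symmetry (w : M) : Prop := unitary w /\ spec_pm1 w.

Definition expm_psum (y : M) (N : nat) : M :=
  \sum_(k < N) ((k`!)%:R)^-1 *: y ^+ k.
Definition expm (y : M) : M :=
  \matrix_(i, j) Complex (limn (fun N => complex.Re (expm_psum y N i j)))
                         (limn (fun N => complex.Im (expm_psum y N i j))).

Definition mlog (w : M) : M :=
  xget 0 [set y | skew_hermitian y /\ opnorm y < pi /\ expm y = w].

Definition geodesic (u v : M) (t : R) : M :=
  u *m expm (Complex t 0 *: mlog (invmx u *m v)).

Definition smooth_fun (f : R -> R) : Prop :=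
  forall (k : nat) (t : R), derivable (derive1n k f) t 1.

Definition smooth_curve (b : R -> M) : Prop :=
  forall i j, smooth_fun (fun t => complex.Re (b t i j)) /\
              smooth_fun (fun t => complex.Im (b t i j)).

Definition mderiv (b : R -> M) (t : R) : M :=
  \matrix_(i, j) Complex (derive1 (fun s => complex.Re (b s i j)) t)
                         (derive1 (fun s => complex.Im (b s i j)) t).

(* Piecewise smooth:
   there is a partition 0 = p_0 < ... < p_k = 1 such that on each [p_i, p_{i+1}]
   alpha agrees with a smooth curve b_i. *)
Definition ps_curve_length (u v : M) (L : \bar R) : Prop :=
  exists (alpha : R -> M) (k : nat) (p : nat -> R) (b : nat -> R -> M),
    [/\ alpha 0 = u /\ alpha 1 = v,
        (forall t, 0 <= t <= 1 -> unitary (alpha t)),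
        (0 < k)%N /\ p 0%N = 0 /\ p k = 1 /\
        (forall i, (i < k)%N -> p i < p i.+1),
        (forall i, (i < k)%N -> smooth_curve (b i) /\
            forall t, p i <= t <= p i.+1 -> alpha t = b i t) &
        L = (\sum_(i < k)
              \int[lebesgue_measure]_(t in `[p i, p i.+1])
                 (opnorm (mderiv (b i) t))%:E)%E].

Definition d_inf (u v : M) : \bar R := ereal_inf [set L | ps_curve_length u v L].

End UnitaryDefs.

(* Main.v *)
Require Import Defs.
From HB Require Import structures.
From mathcomp Require Import all_boot all_order all_algebra.
From mathcomp Require Import all_classical all_reals all_analysis.
From mathcomp Require Import complex.
From mathcomp Require Import ring lra.
Import Order.TTheory GRing.Theory Num.Theory.
Import numFieldNormedType.Exports.
Local Open Scope classical_set_scope.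
Local Open Scope ring_scope.
Set Implicit Arguments. Unset Strict Implicit. Unset Printing Implicit Defensive.
Section Scalar.
Variable R : realType.
Local Notation C := R[i].

Lemma cplxE (z : C) : z = Complex (complex.Re z) (complex.Im z).
Proof. by case: z. Qed.

Lemma mulcE (a b c d : R) : (Complex a b : R[i]) * Complex c d = Complex (a*c - b*d) (a*d + b*c).
Proof. by []. Qed.
Lemma onecE : (1 : C) = Complex 1 0. Proof. by []. Qed.
Lemma addcE (a b c d : R) : (Complex a b : R[i]) + Complex c d = Complex (a+c) (b+d).
Proof. by []. Qed.

Lemma iXE (t : R) k : (Complex 0 t : C) ^+ k =
  Complex ((~~ odd k)%:R * (-1)^+(k./2) * t^+k)
          ((odd k)%:R * (-1)^+(k.-1./2) * t^+k).
Proof.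
elim: k => [|k IH].
  by rewrite !expr0 onecE /= !mulr1.
rewrite exprSr IH mulcE.
have := odd_double_half k; set m := k./2; clearbody m.
case: (odd k) => hk; rewrite -hk /= ?add1n ?add0n /= ?odd_double /= ?uphalf_double ?doubleK;
  by congr Complex; rewrite !exprS; ring.
Qed.

Definition Sc (z : C) N := \sum_(k < N) ((k`!)%:R)^-1 * z ^+ k.

Lemma Re_sum I (r : seq I) (P : pred I) (F : I -> C) :
  complex.Re (\sum_(i <- r | P i) F i) = \sum_(i <- r | P i) complex.Re (F i).
Proof. by apply: (big_morph (@complex.Re R)) => // -[a b] [c d]. Qed.
Lemma Im_sum I (r : seq I) (P : pred I) (F : I -> C) :
  complex.Im (\sum_(i <- r | P i) F i) = \sum_(i <- r | P i) complex.Im (F i).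
Proof. by apply: (big_morph (@complex.Im R)) => // -[a b] [c d]. Qed.

Lemma invfactE k : ((k`!)%:R : C)^-1 = Complex ((k`!)%:R^-1) 0.
Proof. by rewrite (complexr0 (k`!%:R^-1)) fmorphV rmorph_nat. Qed.

Lemma ReSc t N : complex.Re (Sc (Complex 0 t) N) = series (cos_coeff t) N.
Proof.
rewrite /Sc Re_sum /series /= big_mkord; apply: eq_bigr => k _.
rewrite invfactE iXE mulcE /= mul0r subr0 mulrC.
by rewrite /cos_coeff /=.
Qed.

Lemma ImSc t N : complex.Im (Sc (Complex 0 t) N) = series (sin_coeff t) N.
Proof.
rewrite /Sc Im_sum /series /= big_mkord; apply: eq_bigr => k _.
rewrite invfactE iXE mulcE /= mul0r addr0 mulrC.
by rewrite /sin_coeff /=.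
Qed.

Lemma cvg_ReSc t : (fun N => complex.Re (Sc (Complex 0 t) N)) @ \oo --> cos t.
Proof.
under eq_fun do rewrite ReSc.
by rewrite unlock; apply: is_cvg_series_cos_coeff.
Qed.

Lemma cvg_ImSc t : (fun N => complex.Im (Sc (Complex 0 t) N)) @ \oo --> sin t.
Proof.
under eq_fun do rewrite ImSc.
by rewrite unlock; apply: is_cvg_series_sin_coeff.
Qed.

Definition ef (t : R) : C := Complex (cos t) (sin t).

Lemma ef_inj a b : -pi < a < pi -> -pi < b < pi -> ef a = ef b -> a = b.
Proof.
move=> ha hb [ca sa].
have hab : `|a| = `|b|.
  apply: cos_inj; rewrite ?cos_norm //.
  - by rewrite in_itv /= normr_ge0 /= ltW // ltr_norml.
  - by rewrite in_itv /= normr_ge0 /= ltW // ltr_norml.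
move/eqP: hab; rewrite eqr_norm2 => /orP[/eqP //|/eqP ab].
have sa0 : sin a = 0.
  have ba : b = - a by rewrite ab opprK.
  by move: sa; rewrite ba sinN => h; lra.
have [a0|a0] := eqVneq a 0.
  by move: ab; rewrite a0 => /eqP; rewrite eq_sym oppr_eq0 => /eqP ->.
have : 0 < sin `|a|.
  by apply: sin_gt0_pi; rewrite normr_gt0 a0 /= ltr_norml.
have [ge|le] := ler0P a; by rewrite ?sinN sa0 ?oppr0 ltxx.
Qed.

Lemma efN a : ef a * ef (- a) = 1.
Proof.
rewrite /ef mulcE onecE cosN sinN; congr Complex.
  by rewrite -(cos2Dsin2 a); ring.
by ring.
Qed.

Lemma ef0 : ef 0 = 1.
Proof. by rewrite /ef cos0 sin0. Qed.
End Scalar.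

Section Mat.
Variables (R : realType) (n : nat).
Local Notation C := R[i].
Local Notation M := ('M[C]_n).

Lemma ReM (x y : C) : complex.Re (x * y) = complex.Re x * complex.Re y - complex.Im x * complex.Im y.
Proof. by case: x; case: y. Qed.
Lemma ImM (x y : C) : complex.Im (x * y) = complex.Re x * complex.Im y + complex.Im x * complex.Re y.
Proof. by case: x; case: y. Qed.

Lemma cvg_big (I : Type) (r : seq I) (f : I -> nat -> R) (l : I -> R) :
  (forall a, f a @ \oo --> l a) ->
  (fun N => \sum_(a <- r) f a N) @ \oo --> \sum_(a <- r) l a.
Proof.
move=> fl; elim: r => [|x r IH].
  under eq_fun do rewrite big_nil. rewrite big_nil; exact: cvg_cst.
under eq_fun do rewrite big_cons. rewrite big_cons.
exact: cvgD.
Qed.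

Lemma conj_entry (P : M) (e : 'rV[C]_n) i j :
  (invmx P *m diag_mx e *m P) i j = \sum_a (invmx P i a * P a j) * e 0 a.
Proof.
rewrite mul_mx_diag !mxE; apply: eq_bigr => a _; rewrite mxE; ring.
Qed.

Lemma pow_conj (P : M) (e : 'rV[C]_n) k : P \in unitmx ->
  (invmx P *m diag_mx e *m P) ^+ k = invmx P *m diag_mx (\row_a (e 0 a) ^+ k) *m P.
Proof.
move=> Pu; elim: k => [|k IH].
  have -> : (\row_a (e 0 a) ^+ 0) = const_mx 1 by apply/matrixP => i j; rewrite !mxE.
  by rewrite diag_const_mx mulmx1 mulVmx.
rewrite exprS IH -mulmxE.
rewrite -!mulmxA; congr (_ *m _); rewrite mulKVmx // mulmxA; congr (_ *m _).
rewrite mul_diag_mx; apply/matrixP => i j; rewrite !mxE.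
by rewrite mulrnAr exprS.
Qed.

Lemma psum_conj (P : M) (e : 'rV[C]_n) N i j : P \in unitmx ->
  expm_psum (invmx P *m diag_mx e *m P) N i j =
  \sum_a (invmx P i a * P a j) * Sc (e 0 a) N.
Proof.
move=> Pu; rewrite /expm_psum summxE.
under eq_bigr do rewrite mxE pow_conj // conj_entry mulr_sumr.
rewrite exchange_big; apply: eq_bigr => a _; rewrite /Sc mulr_sumr.
by apply: eq_bigr => k _; rewrite mxE; ring.
Qed.

Lemma expm_conj (P : M) (th : 'I_n -> R) : P \in unitmx ->
  expm (invmx P *m diag_mx (\row_a Complex 0 (th a)) *m P) =
  invmx P *m diag_mx (\row_a ef (th a)) *m P.
Proof.
move=> Pu; apply/matrixP => i j; rewrite /expm mxE conj_entry.
rewrite [RHS]cplxE; congr Complex.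
  under eq_fun do rewrite psum_conj // Re_sum.
  apply: cvg_lim => //; rewrite Re_sum; apply: cvg_big => a.
  under eq_fun do rewrite mxE ReM.
  rewrite mxE ReM; apply: cvgB; apply: cvgM; try exact: cvg_cst.
    exact: cvg_ReSc.
  exact: cvg_ImSc.
under eq_fun do rewrite psum_conj // Im_sum.
apply: cvg_lim => //; rewrite Im_sum; apply: cvg_big => a.
under eq_fun do rewrite mxE ImM.
rewrite mxE ImM; apply: cvgD; apply: cvgM; try exact: cvg_cst.
  exact: cvg_ImSc.
exact: cvg_ReSc.
Qed.

Local Open Scope sesquilinear_scope.

Lemma adjE (w : M) : adj w = w ^t*.
Proof. by apply/matrixP => i j; rewrite !mxE; case: (w j i). Qed.

Definition nsq (x : 'cV[C]_n) : R :=
  \sum_i ((complex.Re (x i 0)) ^+ 2 + (complex.Im (x i 0)) ^+ 2).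

Lemma vnormE x : vnorm x = Num.sqrt (nsq x). Proof. by []. Qed.

Lemma nsq_ge0 x : 0 <= nsq x.
Proof. by apply: sumr_ge0 => i _; rewrite addr_ge0 // sqr_ge0. Qed.

Lemma conjM (z : C) : Num.conj z * z = Complex (complex.Re z ^+ 2 + complex.Im z ^+ 2) 0.
Proof. by case: z => a b; rewrite [Num.conj _]/= mulcE /=; congr Complex; ring. Qed.

Lemma nsqE x : (x ^t* *m x) 0 0 = Complex (nsq x) 0.
Proof.
rewrite !mxE [LHS]cplxE Re_sum Im_sum; congr Complex.
  by apply: eq_bigr => i _; rewrite !mxE conjM.
by apply: big1 => i _; rewrite !mxE conjM.
Qed.

Lemma nsq_unitary (Q : M) x : Q ^t* *m Q = 1%:M -> nsq (Q *m x) = nsq x.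
Proof.
move=> hQ; have := nsqE (Q *m x).
rewrite trmx_mul map_mxM mulmxA -(mulmxA _ _ Q) hQ mulmx1 nsqE.
by case.
Qed.

Lemma nsq_diag (th : 'I_n -> R) x :
  nsq (diag_mx (\row_a Complex 0 (th a)) *m x) =
  \sum_i th i ^+ 2 * ((complex.Re (x i 0)) ^+ 2 + (complex.Im (x i 0)) ^+ 2).
Proof.
rewrite /nsq; apply: eq_bigr => i _; rewrite mul_diag_mx !mxE ReM ImM /=; ring.
Qed.

Lemma nsq_diag_le (th : 'I_n -> R) x :
  nsq (diag_mx (\row_a Complex 0 (th a)) *m x) <= (\sum_i th i ^+ 2) * nsq x.
Proof.
rewrite nsq_diag /nsq mulr_sumr; apply: ler_sum => i _.
apply: ler_wpM2r; first by rewrite addr_ge0 // sqr_ge0.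
rewrite (bigD1 i) //= lerDl; apply: sumr_ge0 => j _; exact: sqr_ge0.
Qed.

Lemma sum_delta (k : 'I_n) (f : 'I_n -> R) :
  \sum_i f i * ((complex.Re ((delta_mx k 0 : 'cV[C]_n) i 0)) ^+ 2 +
                (complex.Im ((delta_mx k 0 : 'cV[C]_n) i 0)) ^+ 2) = f k.
Proof.
rewrite (bigD1 k) //= big1 ?addr0.
  by rewrite !mxE !eqxx /=; rewrite expr1n expr0n /= addr0 mulr1.
move=> i ik; rewrite !mxE (negbTE ik) /=.
by rewrite expr0n /= addr0 mulr0.
Qed.

Lemma opnorm_ge (P : M) (th : 'I_n -> R) k :
  P *m P ^t* = 1%:M -> P ^t* *m P = 1%:M ->
  `|th k| <= opnorm (P ^t* *m diag_mx (\row_a Complex 0 (th a)) *m P).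
Proof.
move=> h1 h2; rewrite /opnorm.
have hP' : (P ^t*) ^t* *m P ^t* = 1%:M by rewrite trmxCK.
apply: ub_le_sup.
  exists (Num.sqrt (\sum_i th i ^+ 2)) => _ [x hx <-].
  rewrite vnormE -!mulmxA nsq_unitary // ler_sqrt; last first.
    by apply: sumr_ge0 => i _; exact: sqr_ge0.
  have nx : nsq x = 1.
    by rewrite -(sqr_sqrtr (nsq_ge0 x)) -vnormE hx expr1n.
  apply: le_trans (nsq_diag_le _ _) _.
  by rewrite nsq_unitary // nx mulr1.
exists (P ^t* *m delta_mx k 0).
  rewrite /= vnormE nsq_unitary //.
  have := sum_delta k (fun=> 1); under eq_bigr do rewrite mul1r.
  by move=> h; rewrite /nsq h sqrtr1.
rewrite vnormE -!mulmxA nsq_unitary // (mulmxA P) h1 mul1mx nsq_diag.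
by rewrite sum_delta sqrtr_sqr.
Qed.

Lemma eig_conj (P : M) (d : 'rV[C]_n) k : P \in unitmx ->
  eigenvalue (invmx P *m diag_mx d *m P) (d 0 k).
Proof.
move=> Pu; apply/eigenvalueP; exists (delta_mx 0 k *m P).
  rewrite !mulmxA -(mulmxA _ P) mulmxV // mulmx1.
  have -> : (delta_mx 0 k : 'rV[C]_n) *m diag_mx d = d 0 k *: delta_mx 0 k.
    apply/matrixP => i j; rewrite mul_mx_diag !mxE.
    by case: (eqVneq j k) => [->|jk]; rewrite ?eqxx ?(negbTE jk) /= ?andbF ?mul0r ?mulr0 // mulrC.
  by rewrite scalemxAl.
apply/eqP => /(congr1 (mulmx^~ (invmx P))); rewrite mulmxK // mul0mx.
move/matrixP => /(_ 0 k); rewrite !mxE !eqxx /= => /eqP; by rewrite oner_eq0.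
Qed.

Lemma sym_sq (u : M) : symmetry u -> u *m u = 1%:M.
Proof.
case=> hu hs; rewrite /unitary adjE in hu.
have h1 : u *m u ^t* = 1%:M := mulmx1C hu.
have /orthomx_spectralP E : u \is normalmx by apply/normalmxP; rewrite h1 hu.
set P := spectralmx u in E; set d := spectral_diag u in E.
have Pu : P \in unitmx := spectral_unit u.
have hd : forall k, d 0 k ^+ 2 = 1.
  move=> k; have /hs [->|->] : eigenvalue u (d 0 k) by rewrite E; exact: eig_conj.
    by rewrite expr1n.
  by rewrite sqrrN expr1n.
have sq := pow_conj d 2 Pu.
rewrite expr2 in sq.
rewrite E; rewrite [_ *m _]sq.
have -> : \row_a (d 0 a) ^+ 2 = const_mx 1 by apply/matrixP => i j; rewrite !mxE hd.
by rewrite diag_const_mx mulmx1 mulVmx.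
Qed.

Lemma cM (P X Y : M) : P \in unitmx ->
  (invmx P *m X *m P) *m (invmx P *m Y *m P) = invmx P *m (X *m Y) *m P.
Proof. by move=> Pu; rewrite !mulmxA -(mulmxA _ P) mulmxV // mulmx1. Qed.

Lemma c1 (P : M) : P \in unitmx -> invmx P *m 1%:M *m P = 1%:M.
Proof. by move=> Pu; rewrite mulmx1 mulVmx. Qed.

Lemma cinj (P X Y : M) : P \in unitmx ->
  invmx P *m X *m P = invmx P *m Y *m P -> X = Y.
Proof.
move=> Pu /(congr1 (mulmx P)) /(congr1 (mulmx^~ (invmx P))).
by rewrite !mulmxA !mulmxV // !mul1mx !mulmxK.
Qed.

Lemma diagM (a b : 'rV[C]_n) :
  diag_mx a *m diag_mx b = diag_mx (\row_i (a 0 i * b 0 i)).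
Proof.
apply/matrixP => i j; rewrite mul_diag_mx !mxE.
by case: (eqVneq i j) => [->|ij]; rewrite ?eqxx ?(negbTE ij) ?mulr0n ?mulr0 ?mulr1n.
Qed.

Lemma diag1 (a : 'rV[C]_n) : (forall i, a 0 i = 1) -> diag_mx a = 1%:M.
Proof.
move=> h; have -> : a = const_mx 1 by apply/matrixP => i j; rewrite ord1 h mxE.
exact: diag_const_mx.
Qed.

Lemma scale_diag (c : C) (e : 'rV[C]_n) :
  c *: diag_mx e = diag_mx (\row_a (c * e 0 a)).
Proof. by apply/matrixP => i j; rewrite !mxE mulrnAr. Qed.

Lemma sq1_spec (W : M) : W *m W = 1%:M -> spec_pm1 W.
Proof.
move=> h a /eigenvalueP [x hx x0].
have : x = a ^+ 2 *: x.
  by rewrite -{1}(mulmx1 x) -h mulmxA hx -scalemxAl hx scalerA expr2.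
move/eqP; rewrite -subr_eq0 -{1}(scale1r x) -scalerBl scaler_eq0 (negbTE x0) orbF.
by rewrite subr_eq0 eq_sym sqrf_eq1 => /orP[/eqP|/eqP]; [left|right].
Qed.

Lemma expm0 : expm (0 : M) = 1%:M.
Proof.
have := @expm_conj 1%:M (fun _ => 0) (unitmx1 _ _).
rewrite invmx1 mul1mx mulmx1.
have -> : (\row_a Complex 0 0 : 'rV[C]_n) = 0 by apply/matrixP => i j; rewrite !mxE.
rewrite linear0 => ->; rewrite ?invmx1 mul1mx mulmx1; apply: diag1 => i; by rewrite mxE ef0.
Qed.
End Mat.

Local Open Scope sesquilinear_scope.

Theorem proposition3p8 (R : realType) (n : nat) (u v : 'M[R[i]]_n) :
  symmetry u -> symmetry v -> (d_inf u v < (pi : R)%:E)%E ->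
  forall t : R, 0 <= t <= 1 -> spec_pm1 (geodesic u v t).
Proof.
move=> su sv _ t _.
have uu := sym_sq su; have vv := sym_sq sv.
have Uu : u \in unitmx by case: (mulmx1_unit uu).
have iu : invmx u = u by rewrite -{2}(mulKmx Uu u) uu mulmx1.
apply: sq1_spec; rewrite /geodesic iu /mlog.
set S := [set y | _].
have [[y0 hy0]|hS] := pselect (exists y, S y); last first.
  rewrite xgetPN; last by move=> y hy; apply: hS; exists y.
  by rewrite scaler0 expm0 mulmx1.
have := xgetPex 0 (ex_intro _ y0 hy0); set y := xget 0 S.
move=> [ys [yn ye]]; clearbody y.
rewrite /skew_hermitian adjE in ys.
have ynorm : y \is normalmx by apply/normalmxP; rewrite ys mulmxN mulNmx.
have /orthomx_spectralP E := ynorm.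
have PU := spectral_unitarymx y; have Pu := spectral_unit y.
set P := spectralmx y in E PU Pu; set d := spectral_diag y in E.
clearbody P d.
have iP : invmx P = P ^t* := invmx_unitary PU.
have h1 : P *m P ^t* = 1%:M by apply/unitarymxP.
have h2 : P ^t* *m P = 1%:M by rewrite -iP mulVmx.
have hD : diag_mx d = P *m y *m P ^t*.
  by rewrite E iP !mulmxA h1 mul1mx -mulmxA h1 mulmx1.
have hDc : (diag_mx d) ^t* = - diag_mx d.
  by rewrite hD !trmx_mul !map_mxM trmxCK ys mulNmx mulmxN mulmxA.
have hdk : forall k, complex.Re (d 0 k) = 0.
  move=> k; move/matrixP: hDc => /(_ k k); rewrite !mxE eqxx !mulr1n.
  case: (d 0 k) => a b h.
  have : complex.Re (Num.conj (Complex a b : R[i])) = complex.Re (- Complex a b : R[i]) by rewrite h.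
  rewrite (_ : complex.Re (Num.conj (Complex a b : R[i])) = a) //.
  rewrite (_ : complex.Re (- Complex a b : R[i]) = - a) // /= => ?; lra.
set th := fun k => complex.Im (d 0 k).
have hd : d = \row_k Complex 0 (th k).
  by apply/matrixP => i k; rewrite ord1 mxE [LHS]cplxE hdk.
have hth : forall k, -pi < th k < pi.
  move=> k; rewrite -ltr_norml; apply: le_lt_trans (opnorm_ge th k h1 h2) _.
  by rewrite -iP -hd -E.
have Ey : expm y = invmx P *m diag_mx (\row_k ef (th k)) *m P.
  by rewrite E hd expm_conj.
have Et : expm (Complex t 0 *: y) = invmx P *m diag_mx (\row_k ef (t * th k)) *m P.
  rewrite E hd scalemxAl scalemxAr scale_diag.
  have -> : \row_a (Complex t 0 * (\row_k Complex 0 (th k)) 0 a) = \row_a Complex 0 (t * th a).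
    by apply/matrixP=> i k; rewrite !mxE mulcE; congr Complex; ring.
  exact: expm_conj.
set Q := P *m u *m invmx P.
have hu : u = invmx P *m Q *m P.
  by rewrite /Q !mulmxA mulVmx // mul1mx -mulmxA mulVmx // mulmx1.
clearbody Q.
have QQ : Q *m Q = 1%:M.
  by apply: (cinj Pu); rewrite -(@cM _ _ P Q Q Pu) -hu uu [RHS](c1 Pu).
set L := diag_mx (\row_k ef (th k)).
set L' := diag_mx (\row_k ef (- th k)).
have LL' : L *m L' = 1%:M by rewrite diagM; apply: diag1 => i; rewrite !mxE efN.
have uv : u *m (u *m v) = v by rewrite mulmxA uu mul1mx.
have H : Q *m L *m (Q *m L) = 1%:M.
  apply: (cinj Pu). rewrite [RHS](c1 Pu). rewrite -(@cM _ _ P (Q *m L) (Q *m L) Pu). rewrite -(@cM _ _ P Q L Pu).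
  by rewrite -hu -Ey ye uv vv.
have e1 : Q *m L *m Q = L'.
  transitivity (Q *m L *m (Q *m L) *m L'); last by rewrite H mul1mx.
  by rewrite -!mulmxA LL' mulmx1.
have H2 : L *m Q = Q *m L'.
  by rewrite -e1 !mulmxA QQ mul1mx.
have ent : forall j k, ef (th j) * Q j k = Q j k * ef (- th k).
  by move=> j k; move/matrixP: H2 => /(_ j k); rewrite mul_diag_mx mul_mx_diag !mxE.
have ent_t : forall j k, ef (t * th j) * Q j k = Q j k * ef (- (t * th k)).
  move=> j k; have [->|Q0] := eqVneq (Q j k) 0; first by rewrite mulr0 mul0r.
  have : ef (th j) = ef (- th k) by apply: (mulIf Q0); rewrite ent mulrC.
  move=> /ef_inj -> //.
    by rewrite mulrN mulrC.
  by have := hth k; move=> /andP[a b]; apply/andP; split; lra.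
set Lt := diag_mx (\row_k ef (t * th k)).
set Lt' := diag_mx (\row_k ef (- (t * th k))).
have H3 : Lt *m Q = Q *m Lt'.
  by apply/matrixP => j k; rewrite mul_diag_mx mul_mx_diag !mxE ent_t.
have LtL : Lt' *m Lt = 1%:M.
  by rewrite diagM; apply: diag1 => i; rewrite !mxE mulrC efN.
have H4 : Q *m Lt *m (Q *m Lt) = 1%:M.
  by rewrite -mulmxA (mulmxA Lt) H3 !mulmxA QQ mul1mx LtL.
rewrite Et hu. rewrite (@cM _ _ P Q Lt Pu). by rewrite (@cM _ _ P (Q *m Lt) (Q *m Lt) Pu) H4 (c1 Pu).
Qed.
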